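(* Let $0<\lambda<n$ and $1\le p<\infty$. There exist functions $f\in V_0L^{p,\lambda}\cap V_\infty L^{p,\lambda}$ which do not satisfy $\lim_{N\to\infty}\sup_{x\in\mathbb{R}^n}\int_{B(x,1)}|f(y)|^p\chi_{\mathbb{R}^n\setminus B(0,N)}(y)\,dy=0$.
   Context: $B(x,r)$ is the open ball in $\mathbb{R}^n$ with center $x$ and radius $r$. For $f\in L^1_{\mathrm{loc}}(\mathbb{R}^n)$ let $\mathfrak{M}_{p,\lambda}(f;x,r):=r^{-\lambda}\int_{B(x,r)}|f(y)|^p\,dy$. The homogeneous Morrey space $L^{p,\lambda}(\mathbb{R}^n)$ consists of $f\in L^p_{\mathrm{loc}}(\mathbb{R}^n)$ with $\|f\|_{p,\lambda}:=\sup_{x\in\mathbb{R}^n,\,r>0}\mathfrak{M}_{p,\lambda}(f;x,r)^{1/p}<\infty$. $V_0L^{p,\lambda}=\{f\in L^{p,\lambda}:\lim_{r\to0}\sup_{x}\mathfrak{M}_{p,\lambda}(f;x,r)=0\}$ and $V_\infty L^{p,\lambda}=\{f\in L^{p,\lambda}:\lim_{r\to\infty}\sup_{x}\mathfrak{M}_{p,\lambda}(f;x,r)=0\}$. *)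

(* Defs.v *)
From HB Require Import structures.
From mathcomp Require Import all_boot all_order all_algebra.
From mathcomp Require Import all_classical all_reals all_analysis.
Set Implicit Arguments. Unset Strict Implicit. Unset Printing Implicit Defensive.
Import Order.TTheory GRing.Theory Num.Theory.
Import numFieldNormedType.Exports.
Local Open Scope classical_set_scope.
Local Open Scope ring_scope.

(* Euclidean space R^(k+1) realised as the iterated product
   ((R * R) * ...) * R with the iterated product of Lebesgue measures. *)
Record EucSpace (R : realType) := {
  es_disp : measure_display;
  es_car : measurableType es_disp;
  es_mu : {measure set es_car -> \bar R};
  es_dist2 : es_car -> es_car -> R;
  es_zero : es_car }.

Fixpoint Rsp (R : realType) (k : nat) : EucSpace R :=
  match k with
  | 0 => @Build_EucSpace R _ (measurableTypeR R) (@lebesgue_measure R)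
           (fun x y => (x - y) ^+ 2) 0
  | k.+1 => let E := Rsp R k in
      @Build_EucSpace R _ _
        (product_measure1 (es_mu E) (@lebesgue_measure R) : measure _ R)
        (fun x y => @es_dist2 _ E x.1 y.1 + (x.2 - y.2) ^+ 2)
        (es_zero E, 0)
  end.

(* R^n for n >= 1 *)
Definition Rn (R : realType) (n : nat) : EucSpace R := Rsp R n.-1.

Section Morrey.
Variables (R : realType) (E : EucSpace R).
Local Notation X := (es_car E).
Local Notation mu := (es_mu E).

Definition Ball (x : X) (r : R) : set X := [set y | es_dist2 x y < r ^+ 2].

Definition origin : X := es_zero E.

Definition morreyM (p lam : R) (f : X -> R) (x : X) (r : R) : \bar R :=
  ((r `^ (- lam))%:E * \int[mu]_(y in Ball x r) ((`|f y| `^ p)%:E))%E.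

Definition Lploc (p : R) (f : X -> R) : Prop :=
  measurable_fun setT f /\
  forall x r, 0 < r -> (\int[mu]_(y in Ball x r) ((`|f y| `^ p)%:E) < +oo)%E.

Definition inMorrey (p lam : R) (f : X -> R) : Prop :=
  Lploc p f /\
  exists C : R, forall x r, 0 < r -> (morreyM p lam f x r <= C%:E)%E.

Definition supM (p lam : R) (f : X -> R) (r : R) : \bar R :=
  ereal_sup [set morreyM p lam f x r | x in [set: X]].

Definition inV0Morrey (p lam : R) (f : X -> R) : Prop :=
  inMorrey p lam f /\ supM p lam f r @[r --> 0^'+] --> 0%E.

Definition inVinfMorrey (p lam : R) (f : X -> R) : Prop :=
  inMorrey p lam f /\ supM p lam f r @[r --> +oo] --> 0%E.

Definition tailInt (p : R) (f : X -> R) (N : nat) (x : X) : \bar R :=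
  \int[mu]_(y in Ball x 1)
     ((`|f y| `^ p) * \1_(~` Ball origin N%:R) y)%:E.

Definition tailSup (p : R) (f : X -> R) (N : nat) : \bar R :=
  ereal_sup [set tailInt p f N x | x in [set: X]].

End Morrey.

(* Main.v *)
Require Import Defs.
From HB Require Import structures.
From mathcomp Require Import all_boot all_order all_algebra.
From mathcomp Require Import all_classical all_reals all_analysis.
From mathcomp Require Import measurable_realfun.
From mathcomp Require Import ring lra.
Set Implicit Arguments. Unset Strict Implicit.
Import Order.TTheory GRing.Theory Num.Theory.
Local Open Scope classical_set_scope.
Local Open Scope ring_scope.

Section S.
Variable R : realType.
Local Notation X k := (es_car (Rsp R k)).

Fixpoint pr (k : nat) : X k -> R :=
  match k return X k -> R with
  | 0 => fun x => x
  | k'.+1 => fun x => @pr k' x.1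
  end.

Fixpoint Sset (A : set R) (k : nat) : set (X k) :=
  match k return set (X k) with
  | 0 => A
  | k'.+1 => @Sset A k' `*` `[0, 1]%classic
  end.

Fixpoint box (k : nat) : X k -> R -> set (X k) :=
  match k return X k -> R -> set (X k) with
  | 0 => fun x d => `](x - d), (x + d)[%classic
  | k'.+1 => fun x d => @box k' x.1 d `*` `](x.2 - d), (x.2 + d)[%classic
  end.

Fixpoint ctr (k : nat) (c : R) : X k :=
  match k return X k with
  | 0 => c
  | k'.+1 => (@ctr k' c, 2^-1)
  end.

Arguments Sset : clear implicits.
Arguments ctr : clear implicits.
Arguments pr {k}.
Arguments box {k}.

Lemma dist2_ge0 k (x y : X k) : 0 <= es_dist2 x y.
Proof. elim: k x y => [|k IH] x y /=; first exact: sqr_ge0.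
by rewrite addr_ge0 ?sqr_ge0. Qed.

Lemma dist2_pr k (x y : X k) : (pr x - pr y) ^+ 2 <= es_dist2 x y.
Proof. elim: k x y => [|k IH] x y /=; first by [].
by apply: le_trans (IH _ _) _; rewrite lerDl sqr_ge0. Qed.

Lemma pr_zero k : pr (es_zero (Rsp R k)) = 0.
Proof. by elim: k. Qed.

Lemma pr_ctr k c : pr (ctr k c) = c.
Proof. by elim: k. Qed.

Lemma mdist2 k (x : X k) : measurable_fun setT (es_dist2 x).
Proof.
elim: k x => [|k IH] x /=.
  by apply: measurable_funX; apply: measurable_funB.
apply: measurable_funD.
  exact: (measurableT_comp (IH x.1) measurable_fst).
apply: measurable_funX; apply: measurable_funB => //.
Qed.

Lemma mBall k (x : X k) r : measurable (Ball x r).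
Proof.
have := mdist2 x measurableT (measurable_itv `]-oo, (r ^+ 2)[).
rewrite setTI; congr measurable; apply/seteqP; split => y /=;
  by rewrite in_itv /=.
Qed.

Lemma mSS A (k : nat) : measurable A -> measurable (Sset A k).
Proof. move=> mA; elim: k => [|k IH] //=. exact: measurableX. Qed.

Lemma mbox k (x : X k) d : measurable (box x d).
Proof. elim: k x => [|k IH] x /=; first exact: measurable_itv.
exact: measurableX. Qed.


Lemma leb_oo (a b : R) : a <= b ->
  lebesgue_measure (`]a, b[%classic : set R) = (b - a)%:E.
Proof.
move=> ab; rewrite lebesgue_measure_itv /= lte_fin.
case: (ltrP a b) => h; first by rewrite EFinB.
have -> : b = a by apply/eqP; rewrite eq_le h ab.
by rewrite subrr.
Qed.

Lemma leb_cc (a b : R) : a <= b ->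
  lebesgue_measure (`[a, b]%classic : set R) = (b - a)%:E.
Proof.
move=> ab; rewrite lebesgue_measure_itv /= lte_fin.
case: (ltrP a b) => h; first by rewrite EFinB.
have -> : b = a by apply/eqP; rewrite eq_le h ab.
by rewrite subrr.
Qed.

Lemma box_mu k (x : X k) d : 0 < d ->
  es_mu (Rsp R k) (box x d) = ((d *+ 2) ^+ k.+1)%:E.
Proof.
move=> d0; elim: k x => [|k IH] x /=.
  rewrite (@leb_oo (x - d) (x + d)); last lra.
  by congr EFin; rewrite expr1 opprD addrACA subrr add0r opprK mulr2n.
rewrite product_measure1E; [|exact: mbox|exact: measurable_itv].
rewrite IH [in RHS]exprSr EFinM; congr (_ * _)%E.
apply: eq_trans (@leb_oo (x.2 - d) (x.2 + d) _) _; first lra.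
by congr EFin; rewrite opprD addrACA subrr add0r opprK mulr2n.
Qed.

Lemma box_dist k (x : X k) d y : 0 < d -> box x d y ->
  es_dist2 x y < k.+1%:R * d ^+ 2.
Proof.
move=> d0; elim: k x y => [|k IH] x y /=.
  rewrite in_itv /= => /andP[h1 h2]; rewrite mul1r; nra.
move=> [/IH h1]; rewrite in_itv /= => /andP[h2 h3].
rewrite -(addn1 k.+1) natrD mulrDl mul1r; apply: ltrD => //; nra.
Qed.

Lemma box_pr k (x : X k) d y : box x d y -> pr x - d < pr y.
Proof. elim: k x y => [|k IH] x y /=; first by rewrite in_itv /= => /andP[].
by move=> [/IH]. Qed.

Lemma box_Sset k A c d : (forall t, c - d < t < c + d -> A t) ->
  0 < d -> d <= 2^-1 -> box (ctr k c) d `<=` Sset A k.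
Proof.
move=> hA d0 d1; elim: k => [|k IH] /=.
  by move=> y /= /[!in_itv] /= h; exact: hA.
move=> y [/IH h1] /= /[!in_itv] /= /andP[h2 h3]; split => //=.
apply/andP; split; lra.
Qed.

Lemma upper k (A : set R) (x : X k) (r w : R) : measurable A -> 0 < r -> 0 <= w ->
  (forall t : R, lebesgue_measure (`[0%R, 1%R]%classic `&` `](t - r)%R, (t + r)%R[%classic) <= w%:E)%E ->
  (es_mu (Rsp R k) (Ball x r `&` Sset A k) <=
   lebesgue_measure (A `&` `](pr x - r)%R, (pr x + r)%R[%classic) * (w ^+ k)%:E)%E.
Proof.
move=> mA r0 w0 hw; elim: k x => [|k IH] x /=.
  rewrite expr0 mule1; apply: le_measure; rewrite ?inE.
  - by apply: measurableI => //; have h0 := @mBall 0 x r; exact: h0.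
  - by apply: measurableI => //; exact: measurable_itv.
  move=> y [hb hy]; split => //=; rewrite /Ball /= in hb.
  rewrite (@in_itv _ R) /=; apply/andP; split; nra.
apply: (@le_trans _ _ (es_mu (Rsp R k) (Ball x.1 r `&` Sset A k) *
   lebesgue_measure (`[0%R, 1%R]%classic `&` `](x.2 - r)%R, (x.2 + r)%R[%classic))%E).
  rewrite -product_measure1E; last first.
  - by apply: measurableI; exact: measurable_itv.
  - by apply: measurableI; [have h0 := @mBall k x.1 r; exact: h0|exact: mSS].
  apply: le_measure; rewrite ?inE.
  - apply: measurableI; [have h0 := @mBall k.+1 x r; exact: h0|].
    by apply: measurableX; [exact: mSS|exact: measurable_itv].
  - apply: measurableX; apply: measurableI.
    + have h0 := @mBall k x.1 r; exact: h0.
    + exact: mSS.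
    + exact: measurable_itv.
    + exact: measurable_itv.
  move=> y [hb [hy1 hy2]]; rewrite /Ball /= in hb.
  have := dist2_ge0 x.1 y.1; move=> hg.
  split; split => //.
    change (es_dist2 (e:=Rsp R k) x.1 y.1 < r^+2).
    have := sqr_ge0 (x.2 - y.2); lra.
  rewrite /= (@in_itv _ R) /=; apply/andP; split; nra.
rewrite exprSr EFinM muleA; apply: lee_pmul => //.
Qed.


Section Aset.
Variable K : nat.
Hypothesis K1 : (1 <= K)%N.

Fixpoint aa (m : nat) : R :=
  match m with 0 => 0 | m'.+1 => aa m' + 1 + (aa m' + 1) ^+ K end.

Definition Aset : set R := \bigcup_m `[aa m, aa m + 1]%classic.

Lemma aa_ge0 m : 0 <= aa m.
Proof. elim: m => [|m IH] //=; rewrite addr_ge0 ?exprn_ge0 //; lra. Qed.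

Lemma aa_S m : aa m + 1 < aa m.+1.
Proof. rewrite /= ltrDl exprn_gt0 //; have := aa_ge0 m; lra. Qed.

Lemma aa_mono i j : (i <= j)%N -> aa i <= aa j.
Proof.
elim: j => [|j IH]; first by rewrite leqn0 => /eqP ->.
rewrite leq_eqVlt => /orP[/eqP -> //|]; rewrite ltnS => /IH h.
have := aa_S j; lra.
Qed.

Lemma aa_ge m : m%:R <= aa m.
Proof. elim: m => [|m IH] //; have := aa_S m; rewrite -addn1 natrD; lra. Qed.

Lemma locate t : t < aa 0 \/ exists M, aa M <= t < aa M.+1.
Proof.
have [N hN] : exists N : nat, t < N%:R.
  case: (lerP 0 t) => h; last by exists 0%N.
  by exists (Num.Def.archi_bound t); exact: archi_boundP.
have {hN} : t < aa N by apply: (lt_le_trans hN); exact: aa_ge.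
elim: N => [|N IH]; first by left.
move=> h; case: (ltrP t (aa N)) => h'; first exact: IH.
by right; exists N; rewrite h' h.
Qed.

Lemma mAset : measurable Aset.
Proof. by apply: bigcup_measurable => m _; exact: measurable_itv. Qed.

Lemma Aset_ge0 y : Aset y -> 0 <= y.
Proof.
move=> [j _] /=; rewrite (@in_itv _ R) /= => /andP[h _].
by apply: le_trans h; exact: aa_ge0.
Qed.

Lemma root_le (s u : R) : 0 <= s -> s ^+ K <= u -> s <= u `^ (K%:R^-1).
Proof.
move=> s0 hs.
have -> : s = (s ^+ K) `^ (K%:R^-1).
  rewrite -powR_mulrn // -powRrM mulfV ?powRr1 //.
  by rewrite pnatr_eq0 -lt0n.
apply: ge0_ler_powR => //; rewrite ?invr_ge0 ?ler0n //.
- by rewrite nnegrE exprn_ge0.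
- by rewrite nnegrE; apply: le_trans hs; rewrite exprn_ge0.
Qed.

Lemma Aset_bound c r : 0 < r ->
  (lebesgue_measure (Aset `&` `](c - r)%R, (c + r)%R[%classic) <=
   (1 + (r *+ 2) `^ (K%:R^-1))%:E)%E.
Proof.
move=> r0.
have hp : 0 <= (r *+ 2) `^ (K%:R^-1) := powR_ge0 _ _.
have mI : measurable (Aset `&` `](c - r)%R, (c + r)%R[%classic).
  by apply: measurableI; [exact: mAset|exact: measurable_itv].
have one M : (lebesgue_measure (`[aa M, aa M + 1]%classic : set R) = 1%:E).
  by rewrite leb_cc; [rewrite addrAC subrr add0r|lra].
have case1 M : Aset `&` `](c - r)%R, (c + r)%R[%classic `<=` `[aa M, aa M + 1]%classic ->
  (lebesgue_measure (Aset `&` `](c - r)%R, (c + r)%R[%classic) <=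
   (1 + (r *+ 2) `^ (K%:R^-1))%:E)%E.
  move=> sub.
  have h := le_measure (@lebesgue_measure R) (mem_set mI) (mem_set (measurable_itv `[aa M, aa M + 1])) sub.
  apply: le_trans h _.
  rewrite [Z in (Z <= _)%E](_ : _ = 1%:E); first by rewrite lee_fin lerDl.
  exact: one.
case: (locate (c + r)) => [ht|[M /andP[hM1 hM2]]].
  apply: (case1 0%N) => y [/Aset_ge0 hy]; rewrite /= (@in_itv _ R) /= => /andP[_ h].
  by move: ht; rewrite /=; lra.
have piece y : (Aset `&` `](c - r)%R, (c + r)%R[%classic) y ->
    exists2 j, (j <= M)%N & aa j <= y <= aa j + 1.
  move=> [[j _]]; rewrite /= !(@in_itv _ R) /= => /andP[hj1 hj2] /andP[_ hy].
  exists j => //; last by rewrite hj1 hj2.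
  rewrite leqNgt; apply/negP => hjM.
  have := aa_mono hjM; lra.
case: M hM1 hM2 piece => [|M] hM1 hM2 piece.
  apply: (case1 0%N) => y /piece [j]; rewrite leqn0 => /eqP -> h.
  by rewrite /= (@in_itv _ R) /=.
case: (ltrP (aa M + 1) (c - r)) => hc.
  apply: (case1 M.+1) => y hy; have [hyA hyI] := hy.
  have [j hj /andP[hj1 hj2]] := piece y hy.
  move: hyI; rewrite /= !(@in_itv _ R) /= => /andP[hy1 hy2].
  move: hj hj1 hj2; rewrite leq_eqVlt => /orP[/eqP -> h1 h2|].
    by rewrite /= ?(@in_itv _ R) /=; apply/andP; split.
  rewrite ltnS => /aa_mono h h1 h2; lra.
have sub : Aset `&` `](c - r)%R, (c + r)%R[%classic `<=`
    `[0%R, aa M + 1]%classic `|` `[aa M.+1, aa M.+1 + 1]%classic.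
  move=> y hy; have [hyA hyI] := hy.
  have [j hj /andP[hj1 hj2]] := piece y hy.
  move: hj hj1 hj2; rewrite leq_eqVlt => /orP[/eqP -> h1 h2|].
    by right; rewrite /= ?(@in_itv _ R) /=; apply/andP; split.
  rewrite ltnS => /aa_mono h h1 h2; left; rewrite /= (@in_itv _ R) /=.
  apply/andP; split; first exact: Aset_ge0.
  lra.
have mU : measurable (`[0%R, aa M + 1]%classic `|` `[aa M.+1, aa M.+1 + 1]%classic : set R).
  by apply: measurableU; exact: measurable_itv.
have h := le_measure (@lebesgue_measure R) (mem_set mI) (mem_set mU) sub.
have h2 := measureU2 (@lebesgue_measure R) (measurable_itv `[0%R, aa M + 1])
  (measurable_itv `[aa M.+1, aa M.+1 + 1]).
apply: le_trans h _; apply: le_trans h2 _.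
have hs : aa M + 1 <= (r *+ 2) `^ (K%:R^-1).
  apply: root_le; first by have := aa_ge0 M; lra.
  have : aa M.+1 = aa M + 1 + (aa M + 1) ^+ K by [].
  rewrite mulr2n; lra.
rewrite [Z in (Z + _ <= _)%E](_ : _ = (aa M + 1)%:E); last first.
  apply: eq_trans (@leb_cc 0 (aa M + 1) _) _; last by rewrite subr0.
  have := aa_ge0 M; lra.
rewrite [Z in (_ + Z <= _)%E](_ : _ = 1%:E); last exact: one.
by rewrite -EFinD lee_fin; lra.
Qed.

End Aset.

End S.
Arguments Sset {R} A k.

Section Main.
Variable R : realType.
Local Notation X k := (es_car (Rsp R k)).

Lemma powRN_cvgy (e : R) : 0 < e -> r `^ (- e) @[r --> +oo] --> 0.
Proof.
move=> e0; apply/cvgr0Pnorm_le => eps eps0.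
exists (eps `^ (- e^-1)); split; first exact: num_real.
move=> r hr.
have M0 : 0 < eps `^ (- e^-1) by exact: powR_gt0.
have r0 : 0 < r by exact: lt_trans hr.
rewrite ger0_norm ?powR_ge0 // powRN.
have h1 : (eps `^ (- e^-1)) `^ e = eps^-1.
  rewrite -powRrM mulNr mulVf ?gt_eqF // powR_inv1 //; exact: ltW.
have h2 : (eps `^ (- e^-1)) `^ e <= r `^ e.
  by apply: ge0_ler_powR; rewrite ?nnegrE ?ltW.
rewrite h1 in h2.
rewrite -[eps]invrK lef_pV2 ?posrE ?invr_gt0 ?powR_gt0 //.
Qed.


Variables (k K : nat) (lam p : R).
Hypotheses (lam0 : 0 < lam) (lamn : lam < k.+1%:R) (p1 : 1 <= p)
  (K1 : (1 <= K)%N) (Klam : K%:R^-1 < lam).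

Let S := Sset (@Aset R K) k.
Let f : X k -> R := \1_S.
Let mu := es_mu (Rsp R k).

Lemma mS : measurable S.
Proof. by apply: mSS; exact: mAset. Qed.

Lemma powf y : `|f y| `^ p = f y.
Proof.
rewrite /f indicE; case: (y \in S) => /=; first by rewrite normr1 powR1.
have p0 : p != 0.
  by apply/negP => /eqP h; move: p1; rewrite h ler10.
by rewrite normr0 powR0.
Qed.

Lemma int_ball (x : X k) r :
  (\int[mu]_(y in Ball x r) ((`|f y| `^ p)%:E) = mu (Ball x r `&` S))%E.
Proof.
rewrite (eq_integral (fun y => (\1_S y)%:E)); last by move=> y _; rewrite powf.
rewrite integral_indic; [by rewrite setIC|exact: mBall|exact: mS].
Qed.

Lemma mu_le1 (x : X k) r : 0 < r -> (mu (Ball x r `&` S) <= ((r *+ 2) ^+ k.+1)%:E)%E.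
Proof.
move=> r0; have r2 : 0 <= r *+ 2 by rewrite mulrn_wge0 // ltW.
have hI t : (lebesgue_measure (`](t - r)%R, (t + r)%R[%classic : set R) = (r *+ 2)%:E).
  by rewrite leb_oo; [congr EFin; rewrite mulr2n; lra|lra].
apply: le_trans (upper x _ r0 r2 _) _.
- exact: mAset.
- move=> t; apply: le_trans (le_measure _ _ _ (@subIsetr _ _ _)) _; rewrite ?inE.
  + by apply: measurableI; exact: measurable_itv.
  + exact: measurable_itv.
  + by rewrite [Z in (Z <= _)%E](_ : _ = (r *+ 2)%:E) //; exact: hI.
rewrite exprS EFinM; apply: lee_wpmul2r; first by rewrite lee_fin exprn_ge0.
apply: le_trans (le_measure _ _ _ (@subIsetr _ _ _)) _; rewrite ?inE.
+ by apply: measurableI; [exact: mAset|exact: measurable_itv].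
+ exact: measurable_itv.
+ by rewrite [Z in (Z <= _)%E](_ : _ = (r *+ 2)%:E) //; exact: hI.
Qed.


Lemma mu_le2 (x : X k) r : 0 < r ->
  (mu (Ball x r `&` S) <= (1 + (r *+ 2) `^ (K%:R^-1))%:E)%E.
Proof.
move=> r0; apply: le_trans (upper x _ r0 ler01 _) _.
- exact: mAset.
- move=> t; apply: le_trans (le_measure _ _ _ (@subIsetl _ _ _)) _; rewrite ?inE.
  + by apply: measurableI; exact: measurable_itv.
  + exact: measurable_itv.
  + rewrite [Z in (Z <= _)%E](_ : _ = 1%:E) //.
    by apply: eq_trans (@leb_cc _ 0 1 ler01) _; rewrite subr0.
rewrite expr1n mule1; exact: Aset_bound.
Qed.

Definition h1 r := 2 ^+ k.+1 * r `^ (k.+1%:R - lam).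
Definition h2 r := r `^ (- lam) + 2 `^ (K%:R^-1) * r `^ (- (lam - K%:R^-1)).

Lemma h1E r : 0 < r -> r `^ (- lam) * (r *+ 2) ^+ k.+1 = h1 r.
Proof.
move=> r0; rewrite /h1 -[r *+ 2]mulr_natl exprMn -(@powR_mulrn _ r k.+1 (ltW r0)) mulrCA.
congr (_ * _); rewrite -powRD; first by rewrite addrC.
by rewrite (gt_eqF r0) implybT.
Qed.

Lemma h2E r : 0 < r -> r `^ (- lam) * (1 + (r *+ 2) `^ (K%:R^-1)) = h2 r.
Proof.
move=> r0; rewrite /h2 mulrDr mulr1 -[r *+ 2]mulr_natl powRM ?ler0n ?ltW //.
congr (_ + _); rewrite mulrCA; congr (_ * _).
by rewrite -powRD ?(gt_eqF r0) ?implybT // opprB addrC.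
Qed.

Lemma morrey_ge0 (x : X k) r : (0 <= morreyM p lam f x r)%E.
Proof. by rewrite /morreyM int_ball mule_ge0 // lee_fin powR_ge0. Qed.

Lemma morrey_le_h1 (x : X k) r : 0 < r -> (morreyM p lam f x r <= (h1 r)%:E)%E.
Proof.
move=> r0; rewrite /morreyM int_ball -h1E // EFinM.
by apply: lee_wpmul2l; [rewrite lee_fin powR_ge0|exact: mu_le1].
Qed.

Lemma morrey_le_h2 (x : X k) r : 0 < r -> (morreyM p lam f x r <= (h2 r)%:E)%E.
Proof.
move=> r0; rewrite /morreyM int_ball -h2E // EFinM.
by apply: lee_wpmul2l; [rewrite lee_fin powR_ge0|exact: mu_le2].
Qed.

Lemma h1_cvg : h1 r @[r --> 0^'+] --> 0.
Proof.
have H : (0:R) < k.+1%:R - lam by rewrite subr_gt0.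
have := @cvgMl_tmp R R (0^'+) _ (fun x => x `^ (k.+1%:R - lam)) (2^+k.+1) 0 (powR_cvg0 H).
rewrite mulr0; apply; typeclasses eauto.
Qed.

Lemma h2_cvg : h2 r @[r --> +oo] --> 0.
Proof.
have H : (0:R) < lam - K%:R^-1 by rewrite subr_gt0.
have := @cvgMl_tmp R R (+oo) _ (fun x => x `^ (- (lam - K%:R^-1))) (2 `^ (K%:R^-1)) 0 (powRN_cvgy H).
rewrite mulr0 => /(_ _) h3.
have := cvgD (powRN_cvgy lam0) h3.
rewrite addr0; apply; typeclasses eauto.
Qed.

Lemma h1_le r : 0 < r -> r <= 1 -> h1 r <= 2 ^+ k.+1.
Proof.
move=> r0 r1; rewrite /h1; apply: ler_piMr; first exact: exprn_ge0.
rewrite -[leRHS](powRr0 r); apply: ger_powR; first by rewrite r0 r1.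
by rewrite subr_ge0 ltW.
Qed.

Lemma h2_le r : 1 <= r -> h2 r <= 1 + 2 `^ (K%:R^-1).
Proof.
move=> r1; rewrite /h2; apply: lerD.
  by rewrite -[leRHS](powRr0 r); apply: ler_powR => //; rewrite oppr_le0 ltW.
apply: ler_piMr; first exact: powR_ge0.
rewrite -[leRHS](powRr0 r); apply: ler_powR => //.
by rewrite oppr_le0 subr_ge0 ltW.
Qed.


Lemma supM_ge0 r : (0 <= supM p lam f r)%E.
Proof.
apply: le_trans (morrey_ge0 (es_zero (Rsp R k)) r) _.
by apply: ereal_sup_ubound; exists (es_zero (Rsp R k)).
Qed.

Lemma supM_le r (g : R) : (forall x, morreyM p lam f x r <= g%:E)%E ->
  (supM p lam f r <= g%:E)%E.
Proof. by move=> h; apply: ge_ereal_sup => _ [x _ <-]; exact: h. Qed.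

Lemma f_Morrey : inMorrey p lam f.
Proof.
split.
  split; first exact: measurable_indic mS.
  move=> x r r0; rewrite int_ball; apply: le_lt_trans (mu_le1 x r0) _.
  exact: ltry.
exists (2 ^+ k.+1 + (1 + 2 `^ (K%:R^-1))) => x r r0.
have hp : (0:R) <= 1 + 2 `^ (K%:R^-1) by rewrite addr_ge0 ?powR_ge0.
case: (lerP r 1) => hr.
  apply: le_trans (morrey_le_h1 x r0) _; rewrite lee_fin.
  by apply: le_trans (h1_le r0 hr) _; rewrite lerDl.
apply: le_trans (morrey_le_h2 x r0) _; rewrite lee_fin.
by apply: le_trans (h2_le (ltW hr)) _; rewrite lerDr exprn_ge0.
Qed.

Lemma f_V0 : inV0Morrey p lam f.
Proof.
split; first exact: f_Morrey.
apply: (@squeeze_cvge _ _ _ _ (fun=> 0%E) _ (fun r => (h1 r)%:E)).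
- near=> r.
  have r0 : 0 < r by near: r; exact: nbhs_right_gt.
  rewrite supM_ge0 /=; apply: supM_le => x; exact: morrey_le_h1.
- exact: cvg_cst.
- apply: cvg_EFin; first exact: nearW.
  exact: h1_cvg.
Unshelve. all: by end_near.
Qed.

Lemma f_Vinf : inVinfMorrey p lam f.
Proof.
split; first exact: f_Morrey.
apply: (@squeeze_cvge _ _ _ _ (fun=> 0%E) _ (fun r => (h2 r)%:E)).
- near=> r.
  have r0 : 0 < r by near: r; exists 0; split => //; exact: num_real.
  rewrite supM_ge0 /=; apply: supM_le => x; exact: morrey_le_h2.
- exact: cvg_cst.
- apply: cvg_EFin; first exact: nearW.
  exact: h2_cvg.
Unshelve. all: by end_near.
Qed.


Let dl : R := (k.+2%:R)^-1.

Lemma dl_gt0 : 0 < dl.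
Proof. by rewrite /dl invr_gt0 ltr0n. Qed.

Lemma dl_le : dl <= 2^-1.
Proof. by rewrite /dl lef_pV2 ?posrE ?ltr0n // ler_nat. Qed.

Lemma aux_nra (n1 n2 d : R) : n2 * d = 1 -> n2 = n1 + 1 -> 0 < d -> d <= 2^-1 ->
  n1 * d ^+ 2 <= 1.
Proof. move=> h1 h2 h3 h4; subst n2; nra. Qed.

Lemma dl_sq : k.+1%:R * dl ^+ 2 <= 1.
Proof.
apply: (@aux_nra _ k.+2%:R); last exact: dl_le; last exact: dl_gt0.
  by rewrite /dl mulfV // pnatr_eq0.
by rewrite natr1.
Qed.

Lemma aux_tail (v u w a d : R) : v < w ^+ 2 -> u ^+ 2 <= v -> a + 2^-1 - d < u ->
  w <= a -> 0 <= w -> d <= 2^-1 -> False.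
Proof. move=> h1 h2 h3 h4 h5 h6; nra. Qed.

Lemma tail_ge N : ((((dl *+ 2) ^+ k.+1)%:E <= tailSup p f N))%E.
Proof.
set c := @aa R K N + 2^-1.
set x0 := ctr k c.
have hd := dl_gt0; have hd2 := dl_le.
apply: le_ereal_sup_tmp; exists (tailInt p f N x0); first by exists x0.
set T := S `&` ~` Ball (es_zero (Rsp R k)) N%:R.
have mT : measurable T.
  apply: measurableI; first exact: mS.
  apply: measurableC; exact: mBall.
rewrite /tailInt (eq_integral (fun y => (\1_T y)%:E)); last first.
  by move=> y _; rewrite /T indicI powf.
rewrite integral_indic //; last exact: mBall.
rewrite -(box_mu x0 hd).
apply: le_measure; rewrite ?inE; [exact: mbox| by apply: measurableI => //; exact: mBall|].
move=> y hy; split; [split|].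
- apply: (box_Sset (c := c) (d := dl)) hy => // t ht.
  move: ht; rewrite /c => /andP[ht1 ht2].
  exists N => //; rewrite /= (@in_itv _ R) /=; apply/andP; split; lra.
- rewrite /Ball /= => hB.
  have h1 := dist2_pr (es_zero (Rsp R k)) y.
  have h2 := box_pr hy; rewrite /x0 pr_ctr in h2.
  rewrite pr_zero sub0r sqrrN in h1.
  have h3 := @aa_ge R K N.
  have h4 : (0:R) <= N%:R by [].
  rewrite /c in h2.
  exact: (aux_tail hB h1 h2 h3 h4 hd2).
- rewrite /Ball /=.
  have := box_dist hd hy; have := dl_sq.
  rewrite expr1n; lra.
Qed.

Lemma f_tail : ~ (tailSup p f N @[N --> \oo] --> 0%E).
Proof.
move=> H.
have c0 : 0 < (dl *+ 2) ^+ k.+1 by rewrite exprn_gt0 // mulrn_wgt0 // dl_gt0.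
have L : limn (tailSup p f) = 0%E.
  by apply: cvg_lim => //; exact: ereal_hausdorff.
have : (((dl *+ 2) ^+ k.+1)%:E <= limn (tailSup p f))%E.
  by apply: lime_ge; [exact: cvgP H | apply: nearW; exact: tail_ge].
rewrite L lee_fin => h; move: c0; rewrite ltNge h //.
Qed.

End Main.


Theorem theorem4p1 (R : realType) (n : nat) (lam p : R) :
  0 < lam -> lam < n%:R -> 1 <= p ->
  exists f : es_car (Rn R n) -> R,
    inV0Morrey p lam f /\ inVinfMorrey p lam f /\
    ~ (tailSup p f N @[N --> \oo] --> 0%E).
Proof.
move=> lam0 lamn p1.
case: n lamn => [|k] lamn.
  by move: lamn; rewrite ltNge ltW.
have [K [K1 Klam]] : exists K : nat, (1 <= K)%N /\ K%:R^-1 < lam.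
  exists (Num.Def.archi_bound lam^-1).+1; split => //.
  have li : (0:R) <= lam^-1 by rewrite invr_ge0 ltW.
  have h := archi_boundP li.
  rewrite -[Z in _ < Z]invrK ltf_pV2 ?posrE ?invr_gt0 ?ltr0n //.
  by apply: lt_trans h _; rewrite ltr_nat.
exists (\1_(Sset (@Aset R K) k)).
split; first exact: (f_V0 lam0 lamn p1 K1 Klam).
split; first exact: (f_Vinf lam0 lamn p1 K1 Klam).
by apply: f_tail.
Qed.
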